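(* Let $T\ge 1$ and $d\ge 1$ be integers, let $\gamma>0$ and $\beta>0$, and for each task $t\in\{1,\dots,T\}$ let $(x_{t1},y_{t1}),\dots,(x_{tm_t},y_{tm_t})\in\mathbb{R}^d\times\mathbb{R}$ be given data. Let $l:\mathbb{R}\times\mathbb{R}\to\mathbb{R}$ be a loss function that is convex in its second argument. Consider the (non-convex) problem $$\text{(P)}\qquad \min_{A\in\mathbb{R}^{d\times T},\,a_0\in\mathbb{R}^d,\,U\in O^d}\ \sum_{t=1}^{T}\sum_{i=1}^{m_t} l\big(y_{ti},\langle a_t+a_0,U^Tx_{ti}\rangle\big)+\frac{\gamma}{T}\|A\|_{2,1}^2+\beta\|a_0\|_2^2,$$ where $A=[a_1,\dots,a_T]$, and the problem $$\text{(C)}\qquad \min_{W\in\mathbb{R}^{d\times T},\,w_0\in\mathbb{R}^d,\,D}\ \sum_{t=1}^{T}\sum_{i=1}^{m_t} l\big(y_{ti},\langle w_t+w_0,x_{ti}\rangle\big)+\frac{\gamma}{T}\sum_{t=1}^T\langle w_t,D^+w_t\rangle+\beta\langle w_0,w_0\rangle$$ subject to $\operatorname{trace}(D)\le 1$, $\operatorname{range}(W)\subseteq\operatorname{range}(D)$, $D\in S_+^d$, where $W=[w_1,\dots,w_T]$. Then (C) is a convex optimization problem equivalent to (P) in the following sense. If $(\hat W,\hat w_0,\hat D)$ is an optimal solution of (C) and the columns of $\hat U$ form an orthonormal basis of eigenvectors of $\hat D$, then $(\hat A,\hat a_0,\hat U)$ with $\hat A=\hat U^T\hat W$, $\hat a_0=\hat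 U^T\hat w_0$ is an optimal solution of (P). Conversely, if $(\hat A,\hat a_0,\hat U)$ is an optimal solution of (P), then $\hat W=\hat U\hat A$, $\hat w_0=\hat U\hat a_0$, $\hat D=\hat U\,\mathrm{Diag}\!\left(\frac{\|\hat a^i\|_2}{\|\hat A\|_{2,1}}\right)_{i=1}^d\hat U^T$ is an optimal solution of (C), where $\hat a^i$ denotes the $i$-th row of $\hat A$.
   Context: $O^d$ denotes the set of $d\times d$ orthogonal matrices ($U^TU=I$). For a matrix $A\in\mathbb{R}^{d\times T}$ with rows $a^1,\dots,a^d$, $\|A\|_{2,1}=\sum_{i=1}^d\|a^i\|_2$. $S_+^d$ is the set of $d\times d$ symmetric positive semidefinite matrices; $D^+$ is the Moore–Penrose pseudoinverse of $D$; $\operatorname{range}(W)=\{Wz: z\in\mathbb{R}^T\}$; $\mathrm{Diag}(v_i)_{i=1}^d$ is the diagonal matrix with diagonal entries $v_1,\dots,v_d$. *)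

(* Defs.v *)
From HB Require Import structures.
From mathcomp Require Import all_boot all_order all_algebra.
From mathcomp Require Import reals.
From Stdlib Require Import ClassicalEpsilon.
Set Implicit Arguments. Unset Strict Implicit. Unset Printing Implicit Defensive.
Import Order.TTheory GRing.Theory Num.Theory.
Local Open Scope ring_scope.

Section Defs.
Variable R : realType.

Definition dotv n (u v : 'cV[R]_n) : R := \sum_(i < n) u i 0 * v i 0.

Definition rownorm d T (A : 'M[R]_(d, T)) (i : 'I_d) : R :=
  Num.sqrt (\sum_(j < T) A i j ^+ 2).

Definition norm21 d T (A : 'M[R]_(d, T)) : R := \sum_(i < d) rownorm A i.

Definition orthogonal_mx d (U : 'M[R]_d) : Prop := U^T *m U = 1%:M.

Definition psd d (D : 'M[R]_d) : Prop :=
  D^T = D /\ forall v : 'cV[R]_d, 0 <= (v^T *m D *m v) 0 0.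

(* Moore-Penrose conditions; the pseudoinverse is the (unique) matrix
   satisfying them (existence/uniqueness is a standard theorem). *)
Definition penrose m n (D : 'M[R]_(m, n)) (X : 'M[R]_(n, m)) : Prop :=
  [/\ D *m X *m D = D, X *m D *m X = X,
      (D *m X)^T = D *m X & (X *m D)^T = X *m D].

Definition pinv m n (D : 'M[R]_(m, n)) : 'M[R]_(n, m) :=
  epsilon (inhabits 0) (penrose D).

Definition range_sub d T (W : 'M[R]_(d, T)) (D : 'M[R]_d) : Prop :=
  forall z : 'cV[R]_T, exists v : 'cV[R]_d, W *m z = D *m v.

Definition convex_in_2nd (l : R -> R -> R) : Prop :=
  forall (yv u v lam : R), 0 <= lam <= 1 ->
    l yv (lam * u + (1 - lam) * v) <= lam * l yv u + (1 - lam) * l yv v.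

Unset Implicit Arguments.
Variables (T d : nat) (m : 'I_T -> nat)
  (x : forall t : 'I_T, 'I_(m t) -> 'cV[R]_d)
  (y : forall t : 'I_T, 'I_(m t) -> R)
  (l : R -> R -> R) (gamma beta : R).

Definition objP (A : 'M[R]_(d, T)) (a0 : 'cV[R]_d) (U : 'M[R]_d) : R :=
  \sum_(t < T) \sum_(i < m t) l (y t i) (dotv (col t A + a0) (U^T *m x t i))
  + gamma / T%:R * norm21 A ^+ 2 + beta * dotv a0 a0.

Definition optimalP A a0 U : Prop :=
  orthogonal_mx U /\
  forall A' a0' U', orthogonal_mx U' -> objP A a0 U <= objP A' a0' U'.

Definition objC (W : 'M[R]_(d, T)) (w0 : 'cV[R]_d) (D : 'M[R]_d) : R :=
  \sum_(t < T) \sum_(i < m t) l (y t i) (dotv (col t W + w0) (x t i))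
  + gamma / T%:R * (\sum_(t < T) dotv (col t W) (pinv D *m col t W))
  + beta * dotv w0 w0.

Definition feasibleC (W : 'M[R]_(d, T)) (w0 : 'cV[R]_d) (D : 'M[R]_d) : Prop :=
  \tr D <= 1 /\ range_sub W D /\ psd D.

Definition optimalC W w0 D : Prop :=
  feasibleC W w0 D /\
  forall W' w0' D', feasibleC W' w0' D' -> objC W w0 D <= objC W' w0' D'.

Definition convex_problemC : Prop :=
  forall W1 w1 D1 W2 w2 D2 (lam : R),
    feasibleC W1 w1 D1 -> feasibleC W2 w2 D2 -> 0 <= lam <= 1 ->
    feasibleC (lam *: W1 + (1 - lam) *: W2) (lam *: w1 + (1 - lam) *: w2)
              (lam *: D1 + (1 - lam) *: D2) /\
    objC (lam *: W1 + (1 - lam) *: W2) (lam *: w1 + (1 - lam) *: w2)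
         (lam *: D1 + (1 - lam) *: D2)
    <= lam * objC W1 w1 D1 + (1 - lam) * objC W2 w2 D2.

End Defs.

(* Main.v *)
Require Import Defs.
From HB Require Import structures.
From mathcomp Require Import all_boot all_order all_algebra.
From mathcomp Require Import reals.
From mathcomp.real_closed Require Import complex.
From mathcomp Require Import spectral.
From mathcomp Require Import ring lra.
From Stdlib Require Import ClassicalEpsilon.
Set Implicit Arguments. Unset Strict Implicit. Unset Printing Implicit Defensive.
Import Order.TTheory GRing.Theory Num.Theory.
Local Open Scope ring_scope.

Lemma ReD_c (R : realType) (a b : R[i]) : complex.Re (a + b) = complex.Re a + complex.Re b.
Proof. by case: a; case: b. Qed.
Lemma ImD_c (R : realType) (a b : R[i]) : complex.Im (a + b) = complex.Im a + complex.Im b.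
Proof. by case: a; case: b. Qed.
Lemma Re_sum_c (R : realType) n (F : 'I_n -> R[i]) :
  complex.Re (\sum_(k < n) F k) = \sum_(k < n) complex.Re (F k).
Proof. by apply: (big_morph _ (@ReD_c R)). Qed.
Lemma Im_sum_c (R : realType) n (F : 'I_n -> R[i]) :
  complex.Im (\sum_(k < n) F k) = \sum_(k < n) complex.Im (F k).
Proof. by apply: (big_morph _ (@ImD_c R)). Qed.

Lemma sqr_sum_gt0 (R : realType) n (w : 'rV[R]_n) : w != 0 ->
  0 < (w *m w^T) 0 0.
Proof.
move=> wn0; rewrite !mxE.
have [k wk] : exists k, w 0 k != 0.
  apply/existsP; apply: contraR wn0 => /existsPn H; apply/eqP/rowP => k.
  by have := H k; rewrite negbK mxE => /eqP.
rewrite (bigD1 k) //= mxE ltr_pwDl ?sumr_ge0 //.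
  by rewrite -expr2 lt0r sqr_ge0 sqrf_eq0 wk.
by move=> j _; rewrite mxE -expr2 sqr_ge0.
Qed.


Lemma sym_eigvec_row (R : realType) n (D : 'M[R]_n.+1) : D^T = D ->
  exists w : 'rV[R]_n.+1, w != 0 /\ exists mu, w *m D = mu *: w.
Proof.
move=> Dsym.
pose DC := map_mx (real_complex R) D.
have [a /eigenvalueP [v vD vn0]] := @eigenvalue_closed _ _ DC (ltn0Sn n).
pose vr := map_mx (@complex.Re R) v; pose vi := map_mx (@complex.Im R) v.
have E1 : vr *m D = complex.Re a *: vr - complex.Im a *: vi.
  apply/rowP => j.
  have -> : (vr *m D) 0 j = complex.Re ((v *m DC) 0 j).
    rewrite !mxE Re_sum_c; apply: eq_bigr => k _; rewrite !mxE.
    by case: (v 0 k) => p q /=; rewrite mulr0 subr0.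
  rewrite vD !mxE; case: (a) => p q; case: (v 0 j) => r s /=; reflexivity.
have E2 : vi *m D = complex.Im a *: vr + complex.Re a *: vi.
  apply/rowP => j.
  have -> : (vi *m D) 0 j = complex.Im ((v *m DC) 0 j).
    rewrite !mxE Im_sum_c; apply: eq_bigr => k _; rewrite !mxE.
    by case: (v 0 k) => p q /=; rewrite mulr0 add0r.
  rewrite vD !mxE; case: (a) => p q; case: (v 0 j) => r s /=; rewrite addrC; reflexivity.
have S : (vr *m D *m vi^T) 0 0 = (vi *m D *m vr^T) 0 0.
  have -> : vi *m D *m vr^T = (vr *m D *m vi^T)^T.
    by rewrite !trmx_mul trmxK Dsym mulmxA.
  by rewrite [RHS]mxE.
have vri : vi *m vr^T = vr *m vi^T.
  apply/matrixP => i j; rewrite !ord1 !mxE; apply: eq_bigr => k _.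
  by rewrite !mxE mulrC.
move: S; rewrite E1 E2 !mulmxBl !mulmxDl -!scalemxAl vri.
set r1 := vr *m vi^T; set r2 := vr *m vr^T; set r3 := vi *m vi^T.
rewrite !mxE => S.
have Ia : complex.Im a * (r2 0 0 + r3 0 0) = 0.
  have H : forall p q x y z : R, p*x - q*y = q*z + p*x -> q*(z+y) = 0.
    move=> p q x' y' z H.
    have -> : q*(z+y') = (q*z + p*x') - (p*x' - q*y') by ring.
    by rewrite H subrr.
  by move: S; rewrite /r2 /r3 !mxE; exact: H.
have nz : (vr != 0) || (vi != 0).
  apply: contraR vn0; rewrite negb_or !negbK => /andP[/eqP r0 /eqP i0].
  apply/eqP/rowP => k; have := congr1 (fun M : 'rV[R]_n.+1 => M 0 k) r0;
  have := congr1 (fun M : 'rV[R]_n.+1 => M 0 k) i0; rewrite !mxE.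
  by case: (v 0 k) => p q /= -> ->.
have Ia0 : complex.Im a = 0.
  move: Ia => /eqP; rewrite mulf_eq0 => /orP[/eqP -> //|H0].
  have p2 : 0 <= r2 0 0 by rewrite /r2 mxE sumr_ge0 // => k _; rewrite !mxE -expr2 sqr_ge0.
  have p3 : 0 <= r3 0 0 by rewrite /r3 mxE sumr_ge0 // => k _; rewrite !mxE -expr2 sqr_ge0.
  move: H0; case/orP: nz => nz.
    by rewrite gt_eqF // ltr_pwDl // sqr_sum_gt0.
  by rewrite gt_eqF // ltr_pwDr // sqr_sum_gt0.
case/orP: nz => nz.
  by exists vr; split => //; exists (complex.Re a); rewrite E1 Ia0 scale0r subr0.
by exists vi; split => //; exists (complex.Re a); rewrite E2 Ia0 scale0r add0r.
Qed.


Lemma trmxZ' (R : realType) m n (a : R) (A : 'M[R]_(m, n)) : (a *: A)^T = a *: A^T.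
Proof. by apply/matrixP => i j; rewrite !mxE. Qed.
Lemma trmxD' (R : realType) m n (A B : 'M[R]_(m, n)) : (A + B)^T = A^T + B^T.
Proof. by apply/matrixP => i j; rewrite !mxE. Qed.
Lemma trmxB' (R : realType) m n (A B : 'M[R]_(m, n)) : (A - B)^T = A^T - B^T.
Proof. by apply/matrixP => i j; rewrite !mxE. Qed.

Lemma cv_sqr_eq0 (R : realType) n (w : 'cV[R]_n) : (w^T *m w) 0 0 = 0 -> w = 0.
Proof.
move=> H; case: (w =P 0) => // /eqP wn0.
have wt : w^T != 0.
  by apply: contra wn0 => /eqP h0; apply/eqP; rewrite -[w]trmxK h0 trmx0.
by have := sqr_sum_gt0 wt; rewrite trmxK H ltxx.
Qed.

Lemma householder (R : realType) n (u : 'cV[R]_n.+1) : u^T *m u = 1%:M ->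
  exists H : 'M[R]_n.+1, [/\ H^T = H, H *m H = 1%:M & H *m delta_mx 0 0 = u].
Proof.
move=> uu.
pose e : 'cV[R]_n.+1 := delta_mx 0 0.
pose w := e - u; pose s := (w^T *m w) 0 0; pose c := 2 / s.
pose p := u 0 0.
have ee : e^T *m e = 1%:M.
  by rewrite /e -colE; apply/matrixP => i j; rewrite !ord1 !mxE.
have eu : e^T *m u = p%:M.
  by rewrite /e trmx_delta -rowE; apply/matrixP => i j; rewrite !ord1 !mxE.
have ue : u^T *m e = p%:M.
  by rewrite /e -colE; apply/matrixP => i j; rewrite !ord1 !mxE.
have we : w^T *m e = (1 - p)%:M.
  rewrite /w linearB /= mulmxBl ee ue. by rewrite raddfB.
have sE : s = 2 * (1 - p).
  have tw : w^T = e^T - u^T by rewrite /w linearB.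
  rewrite /s tw !mulmxBl !mulmxBr ee eu ue uu !mxE /=; ring.
exists (1%:M - c *: (w *m w^T)); split.
- by rewrite linearB /= linearZ /= trmx_mul trmxK trmx1.
- rewrite mulmxBl !mulmxBr mul1mx mulmx1 -!scalemxAl -!scalemxAr.
  rewrite mul1mx mulmxA -[w *m w^T *m w]mulmxA (mx11_scalar (w^T *m w)) -/s.
  rewrite mul_mx_scalar -scalemxAl !scalerA.
  have K : c * (c * s) = 2 * c.
    rewrite /c; have [->|sn0] := eqVneq s 0; first by rewrite invr0 !mulr0.
    by field.
  rewrite K; apply/matrixP => i j; rewrite !mxE; ring.
- rewrite -/e mulmxBl mul1mx -scalemxAl -mulmxA we mul_mx_scalar scalerA.
  have [p1|p1] := eqVneq (1 - p) 0.
    have w0 : w = 0 by apply: cv_sqr_eq0; rewrite -/s sE p1 mulr0.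
    by rewrite w0 scaler0 subr0; move: w0; rewrite /w => /eqP; rewrite subr_eq0 => /eqP.
  have -> : c * (1 - p) = 1 by rewrite /c sE; field; rewrite p1.
  by rewrite scale1r /w opprB addrC subrK.
Qed.

Lemma sym_eigvec (R : realType) n (D : 'M[R]_n.+1) : D^T = D ->
  exists u : 'cV[R]_n.+1, u^T *m u = 1%:M /\ exists mu, D *m u = mu *: u.
Proof.
move=> Dsym; have [w [wn0 [mu wD]]] := sym_eigvec_row Dsym.
pose q := (w *m w^T) 0 0; have qp : 0 < q by apply: sqr_sum_gt0.
pose k := (Num.sqrt q)^-1.
exists (k *: w^T); split.
  rewrite trmxZ' trmxK -scalemxAl -scalemxAr scalerA (mx11_scalar (w *m w^T)) -/q.
  rewrite -scalemx1 scalerA; have -> : k * k * q = 1; last by rewrite scale1r.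
  rewrite /k -expr2 exprVn sqr_sqrtr ?ltW //.
  by rewrite mulVf // gt_eqF.
exists mu; rewrite -scalemxAr -[D]Dsym -trmx_mul wD trmxZ' scalerA mulrC -scalerA.
by [].
Qed.

Lemma spectral (R : realType) n (D : 'M[R]_n) : D^T = D ->
  exists U : 'M[R]_n, exists lam : 'rV[R]_n,
    U^T *m U = 1%:M /\ D = U *m diag_mx lam *m U^T.
Proof.
elim: n D => [|n IH] D0 Dsym0.
  exists 1%:M, 0; split; first by rewrite trmx1 mulmx1.
  by apply/matrixP => [[]].
have [D [-> Dsym]] : exists D : 'M[R]_(1 + n), D0 = D /\ D^T = D by exists D0.
have [u [uu [mu Du]]] : exists u : 'cV[R]_(1 + n),
  u^T *m u = 1%:M /\ exists mu, D *m u = mu *: u by exact: sym_eigvec Dsym.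
have [H [Hs HH He]] : exists H : 'M[R]_(1 + n),
  [/\ H^T = H, H *m H = 1%:M & H *m delta_mx 0 0 = u] by exact: householder uu.
suff : exists U : 'M[R]_(1 + n), exists lam : 'rV[R]_(1 + n),
    U^T *m U = 1%:M /\ D = U *m diag_mx lam *m U^T by [].
have [M Mdef] : {M : 'M[R]_(1 + n) | M = H *m D *m H} by exists (H *m D *m H).
have Ms : M^T = M by rewrite Mdef !trmx_mul Hs Dsym mulmxA.
have Mc : col 0 M = mu *: delta_mx 0 0.
  by rewrite colE Mdef -!mulmxA He Du -scalemxAr -He mulmxA HH mul1mx.
have M0 : forall i : 'I_(1 + n), M i 0 = mu * (i == 0)%:R.
  by move=> i; have := congr1 (fun A : 'cV[R]_(1 + n) => A i 0) Mc; rewrite !mxE andbT => <-.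
have M0' : forall j : 'I_(1 + n), M 0 j = mu * (j == 0)%:R.
  by move=> j; rewrite -M0; have := congr1 (fun A : 'M[R]_(1 + n) => A 0 j) Ms; rewrite mxE.
have MblK : M = block_mx (mu%:M : 'M_1) 0 0 (drsubmx M).
  rewrite -{1}(submxK M); congr block_mx.
  - apply/matrixP => i j; rewrite !ord1 !mxE.
    have -> : lshift n (0 : 'I_1) = 0 by apply: val_inj.
    by rewrite M0 eqxx mulr1.
  - apply/matrixP => i j; rewrite !ord1 !mxE.
    have -> : lshift n (0 : 'I_1) = 0 by apply: val_inj.
    by rewrite M0' mulr_natr.
  - apply/matrixP => i j; rewrite !ord1 !mxE.
    have -> : lshift n (0 : 'I_1) = 0 by apply: val_inj.
    by rewrite M0 mulr_natr.
pose D' := drsubmx M.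
have D's : D'^T = D' by rewrite /D' trmx_drsub Ms.
have [V [lam' [VV D'E]]] := IH D' D's.
exists (H *m block_mx (1%:M : 'M[R]_1) 0 0 V), (row_mx (const_mx mu : 'rV[R]_1) lam'); split.
  rewrite trmx_mul tr_block_mx !trmx0 trmx1 Hs mulmxA -[_ *m H *m H]mulmxA HH mulmx1.
  rewrite mulmx_block !mulmx0 !mul0mx ?mulmx1 ?mul1mx !addr0 ?add0r VV.
  by symmetry; exact: scalar_mx_block.
have -> : D = H *m M *m H by rewrite Mdef !mulmxA HH mul1mx -mulmxA HH mulmx1.
rewrite MblK -/D' D'E diag_mx_row trmx_mul tr_block_mx !trmx0 trmx1 Hs.
have -> : diag_mx (const_mx mu : 'rV[R]_1) = mu%:M.
  by apply/matrixP => i j; rewrite !ord1 !mxE.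
rewrite !mulmxA; congr (_ *m _); rewrite -!mulmxA; congr (_ *m _).
rewrite !mulmx_block !mulmx0 !mul0mx !mulmx1 !mul1mx !addr0 !add0r.
by rewrite mulmx0.
Qed.


Lemma dotvE (R : realType) n (u v : 'cV[R]_n) : dotv u v = (u^T *m v) 0 0.
Proof. by rewrite /dotv mxE; apply: eq_bigr => i _; rewrite mxE. Qed.
Lemma dotvDl (R : realType) n (a b c : 'cV[R]_n) : dotv (a + b) c = dotv a c + dotv b c.
Proof. by rewrite /dotv -big_split; apply: eq_bigr => i _; rewrite mxE mulrDl. Qed.
Lemma dotvDr (R : realType) n (a b c : 'cV[R]_n) : dotv c (a + b) = dotv c a + dotv c b.
Proof. by rewrite /dotv -big_split; apply: eq_bigr => i _; rewrite mxE mulrDr. Qed.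
Lemma dotvZl (R : realType) n k (a c : 'cV[R]_n) : dotv (k *: a) c = k * dotv a c.
Proof. by rewrite /dotv mulr_sumr; apply: eq_bigr => i _; rewrite mxE mulrA. Qed.
Lemma dotvZr (R : realType) n k (a c : 'cV[R]_n) : dotv c (k *: a) = k * dotv c a.
Proof. by rewrite /dotv mulr_sumr; apply: eq_bigr => i _; rewrite mxE mulrCA. Qed.
Lemma dotvC (R : realType) n (a c : 'cV[R]_n) : dotv a c = dotv c a.
Proof. by rewrite /dotv; apply: eq_bigr => i _; rewrite mulrC. Qed.
Lemma dotvNl (R : realType) n (a c : 'cV[R]_n) : dotv (- a) c = - dotv a c.
Proof. by rewrite -scaleN1r dotvZl mulN1r. Qed.
Lemma dotvBl (R : realType) n (a b c : 'cV[R]_n) : dotv (a - b) c = dotv a c - dotv b c.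
Proof. by rewrite dotvDl dotvNl. Qed.
Lemma dotv_ge0 (R : realType) n (a : 'cV[R]_n) : 0 <= dotv a a.
Proof. by rewrite /dotv sumr_ge0 // => i _; rewrite -expr2 sqr_ge0. Qed.
Lemma dotv_mull (R : realType) n p (A : 'M[R]_(n, p)) a c :
  dotv (A *m a) c = dotv a (A^T *m c).
Proof. by rewrite !dotvE trmx_mul mulmxA. Qed.

Definition bf (R : realType) n (D : 'M[R]_n) (u v : 'cV[R]_n) := dotv u (D *m v).

Lemma bfC (R : realType) n (D : 'M[R]_n) u v : D^T = D -> bf D u v = bf D v u.
Proof. by move=> Ds; rewrite /bf dotvC dotv_mull Ds. Qed.

Lemma colM (R : realType) m n p (A : 'M[R]_(m, n)) (B : 'M[R]_(n, p)) t :
  col t (A *m B) = A *m col t B.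
Proof. by rewrite !colE mulmxA. Qed.

Lemma orthK (R : realType) n (U : 'M[R]_n) : U^T *m U = 1%:M -> U *m U^T = 1%:M.
Proof. exact: mulmx1C. Qed.

Lemma diag_qf (R : realType) n (lam : 'rV[R]_n) (b : 'cV[R]_n) :
  dotv b (diag_mx lam *m b) = \sum_i lam 0 i * b i 0 ^+ 2.
Proof.
rewrite /dotv; apply: eq_bigr => i _; rewrite mul_diag_mx mxE.
by rewrite expr2; ring.
Qed.

Lemma psd_spec (R : realType) n (D : 'M[R]_n) : psd D ->
  exists U : 'M[R]_n, exists lam : 'rV[R]_n,
    [/\ U^T *m U = 1%:M, D = U *m diag_mx lam *m U^T & forall i, 0 <= lam 0 i].
Proof.
case=> Ds Dp; have [U [lam [UU DE]]] := spectral Ds.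
exists U, lam; split => // i.
have := Dp (col i U); rewrite DE.
have -> : (col i U)^T *m (U *m diag_mx lam *m U^T) *m col i U
   = (col i (U^T *m U))^T *m diag_mx lam *m col i (U^T *m U).
  by rewrite !colM trmx_mul trmxK !mulmxA.
rewrite UU !colE !mul1mx trmx_delta.
by rewrite mul_mx_diag -colE !mxE !eqxx mul1r.
Qed.


Lemma bfDl (R : realType) n (D : 'M[R]_n) a b c : bf D (a + b) c = bf D a c + bf D b c.
Proof. by rewrite /bf dotvDl. Qed.
Lemma bfDr (R : realType) n (D : 'M[R]_n) a b c : bf D c (a + b) = bf D c a + bf D c b.
Proof. by rewrite /bf mulmxDr dotvDr. Qed.
Lemma bfZl (R : realType) n (D : 'M[R]_n) k a c : bf D (k *: a) c = k * bf D a c.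
Proof. by rewrite /bf dotvZl. Qed.
Lemma bfZr (R : realType) n (D : 'M[R]_n) k a c : bf D c (k *: a) = k * bf D c a.
Proof. by rewrite /bf -scalemxAr dotvZr. Qed.
Lemma bfBl (R : realType) n (D : 'M[R]_n) a b c : bf D (a - b) c = bf D a c - bf D b c.
Proof. by rewrite /bf dotvBl. Qed.
Lemma bfBr (R : realType) n (D : 'M[R]_n) a b c : bf D c (a - b) = bf D c a - bf D c b.
Proof. by rewrite /bf mulmxBr dotvDr (dotvC c (- _)) dotvNl (dotvC (D *m b)). Qed.
Lemma bf_matD (R : realType) n (D1 D2 : 'M[R]_n) a c : bf (D1 + D2) a c = bf D1 a c + bf D2 a c.
Proof. by rewrite /bf mulmxDl dotvDr. Qed.
Lemma bf_matZ (R : realType) n (D : 'M[R]_n) k a c : bf (k *: D) a c = k * bf D a c.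
Proof. by rewrite /bf -scalemxAl dotvZr. Qed.
Lemma psd_bf (R : realType) n (D : 'M[R]_n) v : psd D -> 0 <= bf D v v.
Proof. by case=> _ Dp; rewrite /bf dotvE mulmxA; apply: Dp. Qed.

Lemma bf_psd0 (R : realType) n (D : 'M[R]_n) u v : psd D -> bf D u u = 0 -> bf D u v = 0.
Proof.
move=> Dp u0; have [Ds _] := Dp.
set a := bf D u v; set b := bf D v v.
have b0 : 0 <= b by apply: psd_bf.
set t := - a / (b + 1).
have := psd_bf (u + t *: v) Dp.
rewrite !bfDl !bfDr !bfZl !bfZr u0 (bfC v u Ds) -/a -/b.
have b1 : b + 1 != 0 by rewrite gt_eqF // ltr_pwDr.
have -> : 0 + t * a + (t * a + t * (t * b)) = - (a ^+ 2 * (b + 2%:R) / (b + 1) ^+ 2).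
  by rewrite /t; field.
rewrite oppr_ge0 => h.
have h2 : a ^+ 2 * (b + 2%:R) / (b + 1) ^+ 2 = 0.
  apply/eqP; rewrite eq_le h /=; apply: divr_ge0; [apply: mulr_ge0; [exact: sqr_ge0 | lra] | exact: sqr_ge0].
move: h2 => /eqP; rewrite !mulf_eq0 invr_eq0 expf_eq0 (negPf b1) andbF orbF.
have b2 : (b + 2%:R == 0) = false by apply: gt_eqF; lra.
by rewrite orbb b2 orbF => /eqP.
Qed.


Definition rinv (R : realType) n (lam : 'rV[R]_n) : 'rV[R]_n := \row_i (lam 0 i)^-1.

Lemma UdiagM (R : realType) n (U : 'M[R]_n) (a b : 'rV[R]_n) : U^T *m U = 1%:M ->
  U *m diag_mx a *m U^T *m (U *m diag_mx b *m U^T)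
  = U *m diag_mx (\row_i (a 0 i * b 0 i)) *m U^T.
Proof.
move=> UU; rewrite !mulmxA -[U *m diag_mx a *m U^T *m U]mulmxA UU mulmx1.
by rewrite -[U *m diag_mx a *m diag_mx b]mulmxA mulmx_diag.
Qed.

Lemma Udiag_tr (R : realType) n (U : 'M[R]_n) (a : 'rV[R]_n) :
  (U *m diag_mx a *m U^T)^T = U *m diag_mx a *m U^T.
Proof. by rewrite !trmx_mul trmxK tr_diag_mx mulmxA. Qed.

Lemma pinv_ok (R : realType) n (D : 'M[R]_n) : psd D -> penrose D (pinv D).
Proof.
move=> /psd_spec [U [lam [UU DE _]]].
rewrite /pinv; apply: epsilon_spec.
exists (U *m diag_mx (rinv lam) *m U^T).
have E1 : forall i, lam 0 i * (rinv lam) 0 i * lam 0 i = lam 0 i.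
  move=> i; rewrite mxE; have [->|h] := eqVneq (lam 0 i) 0; first by rewrite !mul0r.
  by rewrite mulfV // mul1r.
have E2 : forall i, (rinv lam) 0 i * lam 0 i * (rinv lam) 0 i = (rinv lam) 0 i.
  move=> i; rewrite mxE; have [->|h] := eqVneq (lam 0 i) 0; first by rewrite invr0 !mul0r.
  by rewrite mulVf // mul1r.
rewrite DE; split.
- rewrite !UdiagM //; congr (_ *m diag_mx _ *m _); apply/rowP => i.
  by rewrite !mxE; have := E1 i; rewrite mxE.
- rewrite !UdiagM //; congr (_ *m diag_mx _ *m _); apply/rowP => i.
  by rewrite !mxE; have := E2 i; rewrite !mxE.
- by rewrite !UdiagM // Udiag_tr.
- by rewrite !UdiagM // Udiag_tr.
Qed.

Lemma quadC (R : realType) n (D : 'M[R]_n) w v : psd D -> w = D *m v ->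
  dotv w (pinv D *m w) = bf D v v.
Proof.
move=> Dp ->; have [DXD _ _ _] := pinv_ok Dp; have [Ds _] := Dp.
by rewrite dotv_mull Ds /bf !mulmxA DXD.
Qed.

Lemma range_diag (R : realType) n (U : 'M[R]_n) (lam : 'rV[R]_n) (b : 'cV[R]_n) :
  U^T *m U = 1%:M -> (forall i, lam 0 i = 0 -> b i 0 = 0) ->
  U *m b = (U *m diag_mx lam *m U^T) *m (U *m diag_mx (rinv lam) *m b).
Proof.
move=> UU hb; rewrite !mulmxA -[U *m diag_mx lam *m U^T *m U]mulmxA UU mulmx1.
rewrite -!mulmxA; congr (_ *m _); rewrite mulmxA mulmx_diag mul_diag_mx.
apply/matrixP => i j; rewrite !ord1 !mxE; have [h|h] := eqVneq (lam 0 i) 0.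
  by rewrite hb // mulr0.
by rewrite mulfV // mul1r.
Qed.


Lemma rownorm_ge0 (R : realType) d T (A : 'M[R]_(d, T)) i : 0 <= rownorm A i.
Proof. exact: sqrtr_ge0. Qed.
Lemma norm21_ge0 (R : realType) d T (A : 'M[R]_(d, T)) : 0 <= norm21 A.
Proof. by rewrite /norm21 sumr_ge0 // => i _; apply: rownorm_ge0. Qed.
Lemma rownorm_sq (R : realType) d T (A : 'M[R]_(d, T)) i :
  rownorm A i ^+ 2 = \sum_j A i j ^+ 2.
Proof. by rewrite /rownorm sqr_sqrtr // sumr_ge0 // => j _; apply: sqr_ge0. Qed.
Lemma rownorm0 (R : realType) d T (A : 'M[R]_(d, T)) i :
  rownorm A i = 0 -> forall j, A i j = 0.
Proof.
move=> h j; have : \sum_j A i j ^+ 2 = 0 by rewrite -rownorm_sq h expr0n.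
move/psumr_eq0P => /(_ (fun j _ => sqr_ge0 (A i j))) /(_ j isT) /eqP.
by rewrite sqrf_eq0 => /eqP.
Qed.

Definition rvec (R : realType) d T (A : 'M[R]_(d, T)) : 'rV[R]_d :=
  \row_(i < d) (rownorm A i / norm21 A).

Lemma rvec_ge0 (R : realType) d T (A : 'M[R]_(d, T)) i : 0 <= rvec A 0 i.
Proof. by rewrite mxE divr_ge0 ?rownorm_ge0 ?norm21_ge0. Qed.

Lemma rvec0 (R : realType) d T (A : 'M[R]_(d, T)) i : rvec A 0 i = 0 -> rownorm A i = 0.
Proof.
rewrite mxE => /eqP; rewrite mulf_eq0 invr_eq0 => /orP[/eqP //|/eqP s0].
move: s0; rewrite /norm21 => /psumr_eq0P.
by move=> /(_ (fun j _ => rownorm_ge0 A j)) /(_ i isT).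
Qed.

Lemma bf_Udiag (R : realType) n (U : 'M[R]_n) (lam : 'rV[R]_n) v :
  bf (U *m diag_mx lam *m U^T) v v = dotv (U^T *m v) (diag_mx lam *m (U^T *m v)).
Proof. by rewrite /bf dotv_mull trmxK !mulmxA. Qed.

Lemma psd_Udiag (R : realType) n (U : 'M[R]_n) (lam : 'rV[R]_n) :
  (forall i, 0 <= lam 0 i) -> psd (U *m diag_mx lam *m U^T).
Proof.
move=> lp; split; first exact: Udiag_tr.
move=> v; rewrite -mulmxA -dotvE; have := bf_Udiag U lam v; rewrite /bf => ->.
rewrite diag_qf.
by rewrite sumr_ge0 // => i _; rewrite mulr_ge0 ?sqr_ge0.
Qed.

Lemma tr_Udiag (R : realType) n (U : 'M[R]_n) (lam : 'rV[R]_n) : U^T *m U = 1%:M ->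
  \tr (U *m diag_mx lam *m U^T) = \sum_i lam 0 i.
Proof. by move=> UU; rewrite mxtrace_mulC mulmxA UU mul1mx mxtrace_diag. Qed.

Lemma K1_feas (R : realType) (T d : nat) (A : 'M[R]_(d, T)) (a0 : 'cV[R]_d) (U : 'M[R]_d) :
  U^T *m U = 1%:M ->
  feasibleC R T d (U *m A) (U *m a0) (U *m diag_mx (rvec A) *m U^T).
Proof.
move=> UU; split; [|split].
- rewrite tr_Udiag //.
  have -> : \sum_i rvec A 0 i = norm21 A / norm21 A.
    by rewrite /norm21 mulr_suml; apply: eq_bigr => i _; rewrite mxE.
  have [->|s0] := eqVneq (norm21 A) 0; first by rewrite mul0r ler01.
  by rewrite mulfV.
- move=> z; exists (U *m diag_mx (rinv (rvec A)) *m (A *m z)).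
  rewrite -mulmxA; apply: range_diag => // i /rvec0 /rownorm0 h.
  by rewrite mxE big1 // => j _; rewrite h mul0r.
- apply: psd_Udiag => i; exact: rvec_ge0.
Qed.

Lemma K1_obj (R : realType) (T d : nat) (m : 'I_T -> nat)
  (x : forall t : 'I_T, 'I_(m t) -> 'cV[R]_d)
  (y : forall t : 'I_T, 'I_(m t) -> R)
  (l : R -> R -> R) (gamma beta : R) (A : 'M[R]_(d, T)) (a0 : 'cV[R]_d) (U : 'M[R]_d) :
  U^T *m U = 1%:M ->
  objC R T d m x y l gamma beta (U *m A) (U *m a0) (U *m diag_mx (rvec A) *m U^T)
  = objP R T d m x y l gamma beta A a0 U.
Proof.
move=> UU; have [_ [_ Dp]] := K1_feas A a0 UU.
rewrite /objC /objP; congr (_ + _ * _ + _).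
- apply: eq_bigr => t _; apply: eq_bigr => i _.
  by rewrite colM -mulmxDr dotv_mull.
- pose s := norm21 A; pose r := rvec A.
  transitivity (\sum_(t < T) \sum_i (r 0 i)^-1 * A i t ^+ 2).
    apply: eq_bigr => t _.
    rewrite (quadC Dp (v := U *m diag_mx (rinv r) *m col t A)); last first.
      rewrite colM; apply: range_diag => // i /rvec0 /rownorm0 h.
      by rewrite mxE h.
    rewrite bf_Udiag !mulmxA UU mul1mx -[diag_mx (rvec A) *m U^T *m U]mulmxA UU mulmx1 -mulmxA diag_qf.
    apply: eq_bigr => i _; rewrite mul_diag_mx !mxE.
    move: (rownorm A i / norm21 A) => q; have [->|h] := eqVneq q 0; first by rewrite invr0 !mul0r.
    by field.
  rewrite exchange_big /=.
  transitivity (\sum_i s * rownorm A i).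
    apply: eq_bigr => i _; rewrite -mulr_sumr -rownorm_sq /r mxE.
    have [s0|sn0] := eqVneq s 0.
      by rewrite /s in s0 *; rewrite s0 invr0 mulr0 invr0 !mul0r.
    have [h|h] := eqVneq (rownorm A i) 0; first by rewrite h mul0r invr0 mul0r mulr0.
    by rewrite /s; field; rewrite h -/s sn0.
  by rewrite -mulr_sumr expr2.
- by rewrite dotv_mull mulmxA UU mul1mx.
Qed.


Lemma wCS (R : realType) n (lam s : 'I_n -> R) :
  (forall i, 0 <= lam i) -> \sum_i lam i <= 1 ->
  (\sum_i lam i * s i) ^+ 2 <= \sum_i lam i * s i ^+ 2.
Proof.
move=> lp l1; set P := \sum_i lam i * s i; set S := \sum_i lam i * s i ^+ 2.
set L := \sum_i lam i.
have E : \sum_i lam i * (s i - P) ^+ 2 = S - 2 * P * P + P ^+ 2 * L.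
  rewrite (eq_bigr (fun i => lam i * s i ^+ 2 - (2 * P) * (lam i * s i) + P ^+ 2 * lam i)); last first.
    by move=> i _; ring.
  by rewrite big_split /= sumrB -!mulr_sumr.
have h0 : 0 <= \sum_i lam i * (s i - P) ^+ 2.
  by rewrite sumr_ge0 // => i _; rewrite mulr_ge0 ?sqr_ge0.
rewrite E in h0.
have h1 : 0 <= P ^+ 2 * (1 - L) by rewrite mulr_ge0 ?sqr_ge0 ?subr_ge0.
lra.
Qed.

Lemma K2 (R : realType) (T d : nat) (m : 'I_T -> nat)
  (x : forall t : 'I_T, 'I_(m t) -> 'cV[R]_d)
  (y : forall t : 'I_T, 'I_(m t) -> R)
  (l : R -> R -> R) (gamma beta : R) (W : 'M[R]_(d, T)) (w0 : 'cV[R]_d) (D U : 'M[R]_d) :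
  0 <= gamma / T%:R ->
  feasibleC R T d W w0 D -> U^T *m U = 1%:M ->
  (forall i : 'I_d, exists lam : R, D *m col i U = lam *: col i U) ->
  objP R T d m x y l gamma beta (U^T *m W) (U^T *m w0) U
  <= objC R T d m x y l gamma beta W w0 D.
Proof.
move=> g0 [trD [rs Dp]] UU /fin_all_exists [f hf].
have UUt := orthK UU.
pose lamv : 'rV[R]_d := \row_i f i.
have DU : D *m U = U *m diag_mx lamv.
  apply/matrixP => i j; have := congr1 (fun M : 'cV[R]_d => M i 0) (hf j).
  by rewrite -colM mul_mx_diag !mxE mulrC.
have DE : D = U *m diag_mx lamv *m U^T by rewrite -DU -mulmxA UUt mulmx1.
have lp : forall i, 0 <= lamv 0 i.
  move=> i; have := psd_bf (col i U) Dp; rewrite /bf hf dotvZr.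
  have -> : dotv (col i U) (col i U) = 1.
    have := congr1 (fun M : 'M[R]_d => M i i) UU; rewrite !mxE eqxx mulr1n => h.
    by rewrite /dotv -h; apply: eq_bigr => k _; rewrite !mxE.
  by rewrite mulr1 mxE.
have l1 : \sum_i lamv 0 i <= 1 by rewrite -(tr_Udiag lamv UU) -DE.
have /fin_all_exists [vf hv] : forall t : 'I_T, exists v : 'cV[R]_d, col t W = D *m v.
  move=> t; have [v hv] := rs (delta_mx t 0).
  by exists v; rewrite colE.
rewrite /objP /objC lerD // ?lerD //.
- rewrite le_eqVlt; apply/orP; left; apply/eqP.
  apply: eq_bigr => t _; apply: eq_bigr => i _.
  by rewrite colM -mulmxDr dotv_mull trmxK mulmxA UUt mul1mx.
- apply: ler_wpM2l => //.
  pose b t := U^T *m vf t.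
  pose s i := Num.sqrt (\sum_t b t i 0 ^+ 2).
  have Ait : forall i t, (U^T *m W) i t = lamv 0 i * b t i 0.
    move=> i t.
    have Ct : col t (U^T *m W) = diag_mx lamv *m b t.
      by rewrite colM hv DE !mulmxA UU mul1mx -mulmxA.
    have colij : forall (M : 'M[R]_(d, T)), (col t M) i 0 = M i t by move=> M; rewrite mxE.
    by rewrite -(colij (U^T *m W)) Ct mul_diag_mx mxE.
  have rn : forall i, rownorm (U^T *m W) i = lamv 0 i * s i.
    move=> i; rewrite /rownorm /s.
    rewrite (eq_bigr (fun t => lamv 0 i ^+ 2 * b t i 0 ^+ 2)); last first.
      by move=> t _; rewrite Ait exprMn.
    by rewrite -mulr_sumr sqrtrM ?sqr_ge0 // sqrtr_sqr ger0_norm.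
  have -> : norm21 (U^T *m W) = \sum_i lamv 0 i * s i.
    by apply: eq_bigr => i _; rewrite rn.
  have -> : \sum_t dotv (col t W) (pinv D *m col t W) = \sum_i lamv 0 i * s i ^+ 2.
    transitivity (\sum_t \sum_i lamv 0 i * b t i 0 ^+ 2).
      apply: eq_bigr => t _; rewrite (quadC Dp (hv t)) DE bf_Udiag diag_qf.
      by [].
    rewrite exchange_big /=; apply: eq_bigr => i _.
    rewrite -mulr_sumr /s sqr_sqrtr // sumr_ge0 // => t _; exact: sqr_ge0.
  exact: wCS.
- by rewrite dotv_mull trmxK mulmxA UUt mul1mx.
Qed.


Lemma bf_qf (R : realType) n (D : 'M[R]_n) v : (v^T *m D *m v) 0 0 = bf D v v.
Proof. by rewrite /bf dotvE mulmxA. Qed.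

Lemma Dcol_eig (R : realType) n (U : 'M[R]_n) (lam : 'rV[R]_n) i : U^T *m U = 1%:M ->
  (U *m diag_mx lam *m U^T) *m col i U = lam 0 i *: col i U.
Proof.
move=> UU; rewrite -colM -mulmxA UU mulmx1.
by apply/matrixP => j k; rewrite mul_mx_diag !mxE mulrC.
Qed.

Lemma combo_feas (R : realType) (T d : nat) W1 (w1 : 'cV[R]_d) D1 W2 w2 D2 (lam : R) :
  feasibleC R T d W1 w1 D1 -> feasibleC R T d W2 w2 D2 -> 0 <= lam <= 1 ->
  feasibleC R T d (lam *: W1 + (1 - lam) *: W2) (lam *: w1 + (1 - lam) *: w2)
                  (lam *: D1 + (1 - lam) *: D2).
Proof.
move=> [tr1 [rs1 [D1s D1p]]] [tr2 [rs2 [D2s D2p]]] /andP[l0 l1].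
have mu0 : 0 <= 1 - lam by rewrite subr_ge0.
have P1 : psd D1 by []. have P2 : psd D2 by [].
have Pc : psd (lam *: D1 + (1 - lam) *: D2).
  split; first by rewrite trmxD' !trmxZ' D1s D2s.
  move=> v; rewrite bf_qf bf_matD !bf_matZ.
  by rewrite addr_ge0 // mulr_ge0 // psd_bf.
split; [|split] => //.
  rewrite mxtraceD !mxtraceZ.
  have h1 := ler_wpM2l l0 tr1; have h2 := ler_wpM2l mu0 tr2.
  lra.
move=> z; have [v1 e1] := rs1 z; have [v2 e2] := rs2 z.
set D := lam *: D1 + (1 - lam) *: D2.
have [U [lv [UU DE lvp]]] := psd_spec Pc.
set w := lam *: (D1 *m v1) + (1 - lam) *: (D2 *m v2).
have -> : (lam *: W1 + (1 - lam) *: W2) *m z = w.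
  by rewrite mulmxDl -!scalemxAl e1 e2.
exists (U *m diag_mx (rinv lv) *m (U^T *m w)).
rewrite {1}(_ : w = U *m (U^T *m w)); last by rewrite mulmxA (orthK UU) mul1mx.
rewrite [X in _ = X *m _]DE; apply: range_diag => // i li.
have Du : D *m col i U = 0.
  by rewrite /D DE Dcol_eig // li scale0r.
have bu : bf D (col i U) (col i U) = 0 by rewrite /bf Du /dotv big1 // => k _; rewrite !mxE mulr0.
move: bu; rewrite /D bf_matD !bf_matZ => bu.
have q1 := psd_bf (col i U) P1; have q2 := psd_bf (col i U) P2.
have z1 : lam * bf D1 (col i U) (col i U) = 0.
  apply/eqP; rewrite eq_le mulr_ge0 // andbT; rewrite -bu lerDl mulr_ge0 //.
have z2 : (1 - lam) * bf D2 (col i U) (col i U) = 0.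
  apply/eqP; rewrite eq_le mulr_ge0 // andbT; rewrite -bu lerDr mulr_ge0 //.
have y1 : lam * bf D1 (col i U) v1 = 0.
  have [->|ln0] := eqVneq lam 0; first by rewrite mul0r.
  by rewrite (bf_psd0 _ P1) ?mulr0 //; move: z1 => /eqP; rewrite mulf_eq0 (negPf ln0) => /eqP.
have y2 : (1 - lam) * bf D2 (col i U) v2 = 0.
  have [->|ln0] := eqVneq (1 - lam) 0; first by rewrite mul0r.
  by rewrite (bf_psd0 _ P2) ?mulr0 //; move: z2 => /eqP; rewrite mulf_eq0 (negPf ln0) => /eqP.
have -> : (U^T *m w) i 0 = dotv (col i U) w.
  by rewrite mxE /dotv; apply: eq_bigr => k _; rewrite !mxE.
by rewrite /w dotvDr !dotvZr -/(bf D1 _ v1) -/(bf D2 _ v2) y1 y2 addr0.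
Qed.


Lemma sum_combo (R : realType) (I : finType) (lam mu : R) (F G H : I -> R) :
  (forall i, F i <= lam * G i + mu * H i) ->
  \sum_i F i <= lam * \sum_i G i + mu * \sum_i H i.
Proof.
move=> h; rewrite !mulr_sumr -big_split /=; exact: ler_sum.
Qed.

Lemma convexity (R : realType) (T d : nat) (m : 'I_T -> nat)
  (x : forall t : 'I_T, 'I_(m t) -> 'cV[R]_d)
  (y : forall t : 'I_T, 'I_(m t) -> R)
  (l : R -> R -> R) (gamma beta : R) :
  0 <= gamma / T%:R -> 0 <= beta -> convex_in_2nd l ->
  convex_problemC R T d m x y l gamma beta.
Proof.
move=> c0 b0 lc W1 w1 D1 W2 w2 D2 lam F1 F2 lr.
have Fc := combo_feas F1 F2 lr; split => //.
move: (lr) => /andP[l0 l1]; have mu0 : 0 <= 1 - lam by rewrite subr_ge0.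
set c := gamma / T%:R.
set W := lam *: W1 + (1 - lam) *: W2; set w0 := lam *: w1 + (1 - lam) *: w2.
set D := lam *: D1 + (1 - lam) *: D2.
have HL : \sum_(t < T) \sum_(i < m t) l (y t i) (dotv (col t W + w0) (x t i))
   <= lam * \sum_(t < T) \sum_(i < m t) l (y t i) (dotv (col t W1 + w1) (x t i))
      + (1 - lam) * \sum_(t < T) \sum_(i < m t) l (y t i) (dotv (col t W2 + w2) (x t i)).
  apply: sum_combo => t; apply: sum_combo => i.
  have -> : col t W + w0 = lam *: (col t W1 + w1) + (1 - lam) *: (col t W2 + w2).
    by apply/matrixP => a b; rewrite !mxE; ring.
  by rewrite (dotvDl (lam *: (col t W1 + w1))) !(dotvZl _ (col t _ + _)); apply: lc.
have [_ [rs [Ds Dps]]] := Fc.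
have [_ [rs1 [D1s D1ps]]] := F1; have [_ [rs2 [D2s D2ps]]] := F2.
have P1 : psd D1 by []. have P2 : psd D2 by []. have Pc : psd D by [].
have HQ : \sum_(t < T) dotv (col t W) (pinv D *m col t W)
   <= lam * \sum_(t < T) dotv (col t W1) (pinv D1 *m col t W1)
      + (1 - lam) * \sum_(t < T) dotv (col t W2) (pinv D2 *m col t W2).
  apply: sum_combo => t.
  have [v ev] := rs (delta_mx t 0); have [v1 ev1] := rs1 (delta_mx t 0).
  have [v2 ev2] := rs2 (delta_mx t 0).
  move: ev ev1 ev2; rewrite -!colE => ev ev1 ev2.
  rewrite (quadC Pc ev) (quadC P1 ev1) (quadC P2 ev2).
  have E : D *m v = lam *: (D1 *m v1) + (1 - lam) *: (D2 *m v2).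
    by rewrite -ev -ev1 -ev2 /W; apply/matrixP => a b; rewrite !mxE.
  have e1 : bf D v v = lam * bf D1 v v1 + (1 - lam) * bf D2 v v2.
    by rewrite /bf E dotvDr !dotvZr.
  have e2 : bf D v v = lam * bf D1 v v + (1 - lam) * bf D2 v v.
    by rewrite /D bf_matD !bf_matZ.
  have i1 := psd_bf (v1 - v) P1; have i2 := psd_bf (v2 - v) P2.
  rewrite !bfBl !bfBr (bfC v1 v D1s) in i1.
  rewrite !bfBl !bfBr (bfC v2 v D2s) in i2.
  have j1 := mulr_ge0 l0 i1; have j2 := mulr_ge0 mu0 i2.
  have : bf D v v = 2 * bf D v v - bf D v v by ring.
  move: e1 e2 j1 j2; set a1 := bf D1 v v1; set a2 := bf D2 v v2.
  set q1 := bf D1 v v; set q2 := bf D2 v v; set r1 := bf D1 v1 v1; set r2 := bf D2 v2 v2.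
  set q := bf D v v.
  move=> e1 e2 j1 j2 _.
  have -> : q = 2 * q - q by ring.
  rewrite {1}e1 e2.
  lra.
have HB : dotv w0 w0 <= lam * dotv w1 w1 + (1 - lam) * dotv w2 w2.
  have h := dotv_ge0 (w1 - w2).
  rewrite !dotvBl (dotvC w1 (w1 - w2)) (dotvC w2 (w1 - w2)) !dotvBl (dotvC w2 w1) in h.
  rewrite /w0 !dotvDl !dotvZl !dotvDr !dotvZr (dotvC w2 w1).
  have h2 := mulr_ge0 (mulr_ge0 l0 mu0) h.
  move: h2; set A := dotv w1 w1; set B := dotv w2 w2; set C := dotv w1 w2.
  move=> h2.
  have -> : lam * (lam * A + (1 - lam) * C) + (1 - lam) * (lam * C + (1 - lam) * B)
    = lam * A + (1 - lam) * B - lam * (1 - lam) * (A - C - (C - B)) by ring.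
  by rewrite lerBlDr lerDl.
rewrite /objC.
have HQ' := ler_wpM2l c0 HQ; have HB' := ler_wpM2l b0 HB.
set L := \sum_(t < T) _ in HL *.
move: HL HQ' HB'.
set L0 := \sum_(t < T) \sum_(i < m t) l (y t i) (dotv (col t W + w0) (x t i)).
set L1 := \sum_(t < T) \sum_(i < m t) l (y t i) (dotv (col t W1 + w1) (x t i)).
set L2 := \sum_(t < T) \sum_(i < m t) l (y t i) (dotv (col t W2 + w2) (x t i)).
set Q0 := \sum_(t < T) dotv (col t W) (pinv D *m col t W).
set Q1 := \sum_(t < T) dotv (col t W1) (pinv D1 *m col t W1).
set Q2 := \sum_(t < T) dotv (col t W2) (pinv D2 *m col t W2).
move=> HL HQ' HB'.
have E : lam * (L1 + c * Q1 + beta * dotv w1 w1) + (1 - lam) * (L2 + c * Q2 + beta * dotv w2 w2)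
  = (lam * L1 + (1 - lam) * L2) + c * (lam * Q1 + (1 - lam) * Q2)
    + beta * (lam * dotv w1 w1 + (1 - lam) * dotv w2 w2) by ring.
rewrite E; apply: lerD; [apply: lerD|] => //.
Qed.


Theorem theorem1 (R : realType) (T d : nat) (m : 'I_T -> nat)
  (x : forall t : 'I_T, 'I_(m t) -> 'cV[R]_d)
  (y : forall t : 'I_T, 'I_(m t) -> R)
  (l : R -> R -> R) (gamma beta : R) :
  (1 <= T)%N -> (1 <= d)%N -> 0 < gamma -> 0 < beta ->
  convex_in_2nd l ->
  [/\ @convex_problemC R T d m x y l gamma beta,
      (forall (W : 'M[R]_(d, T)) (w0 : 'cV[R]_d) (D U : 'M[R]_d),
         @optimalC R T d m x y l gamma beta W w0 D ->
         orthogonal_mx U ->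
         (forall i : 'I_d, exists lam : R, D *m col i U = lam *: col i U) ->
         @optimalP R T d m x y l gamma beta (U^T *m W) (U^T *m w0) U)
    & (forall (A : 'M[R]_(d, T)) (a0 : 'cV[R]_d) (U : 'M[R]_d),
         @optimalP R T d m x y l gamma beta A a0 U ->
         @optimalC R T d m x y l gamma beta (U *m A) (U *m a0)
           (U *m diag_mx (\row_(i < d) (rownorm A i / norm21 A)) *m U^T))].
Proof.
move=> T1 d1 g0 b0 lc.
have c0 : 0 <= gamma / T%:R by rewrite divr_ge0 ?ler0n ?ltW.
split.
- exact: (@convexity R T d m x y l gamma beta c0 (ltW b0) lc).
- move=> W w0 D U [FC optC] UU eig; split => // A' a0' U' UU'.
  apply: le_trans (@K2 R T d m x y l gamma beta W w0 D U c0 FC UU eig) _.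
  rewrite -(@K1_obj R T d m x y l gamma beta A' a0' U' UU').
  exact: optC (K1_feas A' a0' UU').
- move=> A a0 U [UU optP]; split; first exact: (K1_feas A a0 UU).
  move=> W' w0' D' FC'.
  have := @K1_obj R T d m x y l gamma beta A a0 U UU; rewrite /rvec => ->.
  have [U' [lam' [UU' DE' _]]] := psd_spec FC'.2.2.
  have eig : forall i : 'I_d, exists lam : R, D' *m col i U' = lam *: col i U'.
    by move=> i; exists (lam' 0 i); rewrite DE' Dcol_eig.
  apply: le_trans (optP _ _ _ UU') (@K2 R T d m x y l gamma beta W' w0' D' U' c0 FC' UU' eig).
Qed.
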